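(* For every $h\in C_\mathbb{R}(\mathcal{X}^n)$ and $\mu_1,\dots,\mu_n\in\mathrm{Prob}(\mathcal{X})$, $$P_\mathrm{sym}(h:\mu_1,\dots,\mu_n)=\max\{\mu(h)-\mathcal{I}_\mathrm{sym}(\mu):\mu\in\mathrm{Prob}_{\mu_1,\dots,\mu_n}(\mathcal{X}^n)\},$$ with the maximum attained; moreover $|P_\mathrm{sym}(h:\mu_1,\dots,\mu_n)-P_\mathrm{sym}(h':\mu_1,\dots,\mu_n)|\le\|h-h'\|$ for all $h,h'\in C_\mathbb{R}(\mathcal{X}^n)$.
   Context: $\mathcal{X}=\{t_1,\dots,t_d\}$ is a finite set with a fixed order $t_1<\dots<t_d$; $n\in\mathbb{N}$. $\mathrm{Prob}(\mathcal{X}^k)$ is the set of probability measures on $\mathcal{X}^k$, $C_\mathbb{R}(\mathcal{X}^n)$ the real functions on $\mathcal{X}^n$ with norm $\|f\|=\max|f|$; $\mu(h)=\sum_\mathbf{x}h(\mathbf{x})\mu(\mathbf{x})$. $\mathrm{Prob}_{\mu_1,\dots,\mu_n}(\mathcal{X}^n)$ is the set of $\mu\in\mathrm{Prob}(\mathcal{X}^n)$ whose $i$th marginal is $\mu_i$ for each $i$. For $\mathbf{x}\in\mathcal{X}^N$ its type is $\nu_\mathbf{x}(t)=\#\{j:x_j=t\}/N$. $\mathcal{X}_\le^N$ is the set of sequences in $\mathcal{X}^N$ of the form $(t_1,\dots,t_1,\dots,t_d,\dots,t_d)$. $S_N$ acts by $\sigma(\mathbf{x})=(x_{\sigma^{-1}(1)},\dots,x_{\sigma^{-1}(N)})$.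 An approximating sequence for $(\mu_1,\dots,\mu_n)$ is $\Xi(N)=(\xi_1(N),\dots,\xi_n(N))$ with $\xi_i(N)\in\mathcal{X}_\le^N$ and $\nu_{\xi_i(N)}(t)\to\mu_i(t)$ for all $t$. For $h\in C_\mathbb{R}(\mathcal{X}^n)$, $\kappa_N(h(\mathbf{x}_1,\dots,\mathbf{x}_n))=\frac1N\sum_{j=1}^Nh(x_{1j},\dots,x_{nj})$. The mutual pressure is $$P_\mathrm{sym}(h:\mu_1,\dots,\mu_n)=\limsup_{N\to\infty}\frac1N\log\Biggl[\frac1{(N!)^n}\sum_{\sigma_1,\dots,\sigma_n\in S_N}\exp\bigl(N\kappa_N(h(\sigma_1(\xi_1(N)),\dots,\sigma_n(\xi_n(N))))\bigr)\Biggr]$$ (independent of the approximating sequence), and for $\mu$ with marginals $\mu_1,\dots,\mu_n$, $\mathcal{I}_\mathrm{sym}(\mu)=\sup\{\mu(h)-P_\mathrm{sym}(h:\mu_1,\dots,\mu_n):h\in C_\mathbb{R}(\mathcal{X}^n)\}$. *)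

(* Defs.v *)
From HB Require Import structures.
From mathcomp Require Import all_boot all_fingroup.
From Stdlib Require Import Reals ClassicalEpsilon.

Set Implicit Arguments.
Unset Strict Implicit.
Unset Printing Implicit Defensive.

(* The finite ordered alphabet X = {t_1 < ... < t_d} is modelled by 'I_d
   with its natural order.  X^k is {ffun 'I_k -> 'I_d}. *)

Definition rsum (T : finType) (f : T -> R) : R := \big[Rplus/0%R]_(x : T) f x.

Definition isProb (T : finType) (m : T -> R) : Prop :=
  (forall x, (0 <= m x)%R) /\ rsum m = 1%R.

Definition marginal (d n : nat) (m : {ffun 'I_n -> 'I_d} -> R) (i : 'I_n) (t : 'I_d) : R :=
  \big[Rplus/0%R]_(x : {ffun 'I_n -> 'I_d} | x i == t) m x.

Definition coupling (d n : nat) (mus : 'I_n -> 'I_d -> R) (m : {ffun 'I_n -> 'I_d} -> R) : Prop :=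
  isProb m /\ forall i t, marginal m i t = mus i t.

Definition expect (d n : nat) (m : {ffun 'I_n -> 'I_d} -> R) (h : {ffun 'I_n -> 'I_d} -> R) : R :=
  rsum (fun x => (h x * m x)%R).

Definition supdist (d n : nat) (h h' : {ffun 'I_n -> 'I_d} -> R) : R :=
  \big[Rmax/0%R]_(x : {ffun 'I_n -> 'I_d}) Rabs (h x - h' x).

Definition typ (d N : nat) (xi : 'I_N -> 'I_d) (t : 'I_d) : R :=
  (INR #|[pred j : 'I_N | xi j == t]| / INR N)%R.

Definition sorted_seq (d N : nat) (xi : 'I_N -> 'I_d) : Prop :=
  forall j k : 'I_N, (j <= k)%N -> (xi j <= xi k)%N.

Definition approx_seq (d n : nat) (mus : 'I_n -> 'I_d -> R)
  (Xi : forall N : nat, 'I_n -> 'I_N -> 'I_d) : Prop :=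
  (forall N i, sorted_seq (Xi N i)) /\
  forall i t, Un_cv (fun N => typ (Xi N i) t) (mus i t).

Definition is_limsup (u : nat -> R) (L : R) : Prop :=
  (forall eps, (0 < eps)%R -> exists N0, forall N, (N0 <= N)%coq_nat -> (u N <= L + eps)%R) /\
  (forall eps, (0 < eps)%R -> forall N0, exists N, (N0 <= N)%coq_nat /\ (L - eps <= u N)%R).

Definition Rlimsup (u : nat -> R) : R := epsilon (inhabits 0%R) (is_limsup u).

Definition perm_act (d N : nat) (s : {perm 'I_N}) (xi : 'I_N -> 'I_d) : 'I_N -> 'I_d :=
  fun j => xi ((s^-1)%g j).

Definition partfun (d n N : nat) (Xi : 'I_n -> 'I_N -> 'I_d) (h : {ffun 'I_n -> 'I_d} -> R) : R :=
  rsum (fun s : {ffun 'I_n -> {perm 'I_N}} =>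
    exp (INR N * (/ INR N * \big[Rplus/0%R]_(j < N)
           h [ffun i => perm_act (s i) (Xi i) j]))).

Definition Psym (d n : nat) (Xi : forall N : nat, 'I_n -> 'I_N -> 'I_d)
  (h : {ffun 'I_n -> 'I_d} -> R) : R :=
  Rlimsup (fun N => (/ INR N * ln (/ pow (INR (factorial N)) n * partfun (Xi N) h))%R).

(* I is the (finite) value of I_sym(mu) = sup_h (mu(h) - P_sym(h)) *)
Definition is_Isym (d n : nat) (Xi : forall N : nat, 'I_n -> 'I_N -> 'I_d)
  (m : {ffun 'I_n -> 'I_d} -> R) (I : R) : Prop :=
  is_lub (fun r => exists h : {ffun 'I_n -> 'I_d} -> R, r = (expect m h - Psym Xi h)%R) I.

(* Main.v *)
Require Import Defs.
From HB Require Import structures.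
From mathcomp Require Import all_boot all_fingroup.
From Stdlib Require Import Reals Lra Lia ClassicalEpsilon Classical FunctionalExtensionality.
Set Implicit Arguments. Unset Strict Implicit. Unset Printing Implicit Defensive.

Lemma Rplus_assoc' : associative Rplus. Proof. move=> *; rewrite Rplus_assoc. done. Qed.
HB.instance Definition _ := Monoid.isComLaw.Build R 0%R Rplus Rplus_assoc' Rplus_comm Rplus_0_l.

Local Open Scope R_scope.

Section Sums.
Variable I : Type.
Variable r : seq I.
Variable P : pred I.

Lemma bsum_add (f g : I -> R) :
  \big[Rplus/0]_(i <- r | P i) (f i + g i) =
  \big[Rplus/0]_(i <- r | P i) f i + \big[Rplus/0]_(i <- r | P i) g i.
Proof. by rewrite big_split. Qed.

Lemma bsum_scal (c : R) (f : I -> R) :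
  \big[Rplus/0]_(i <- r | P i) (c * f i) = c * \big[Rplus/0]_(i <- r | P i) f i.
Proof.
apply: (big_rec2 (fun a b => a = c * b)); first by ring.
by move=> i a b _ ->; ring.
Qed.

Lemma bsum_le (f g : I -> R) : (forall i, P i -> f i <= g i) ->
  \big[Rplus/0]_(i <- r | P i) f i <= \big[Rplus/0]_(i <- r | P i) g i.
Proof.
move=> H; apply: (big_rec2 (fun a b => a <= b)); first by lra.
by move=> i a b Pi Hab; have := H i Pi; lra.
Qed.

Lemma bsum_ge0 (f : I -> R) : (forall i, P i -> 0 <= f i) ->
  0 <= \big[Rplus/0]_(i <- r | P i) f i.
Proof.
move=> H; apply: (big_rec (fun a => 0 <= a)); first by lra.
by move=> i a Pi Ha; have := H i Pi; lra.
Qed.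

Lemma bsum_const (c : R) :
  \big[Rplus/0]_(i <- r | P i) c = INR (count P r) * c.
Proof.
elim: r => [|x s IH].
  by rewrite big_nil /=; lra.
rewrite big_cons /=; case: (P x); rewrite IH ?add1n ?add0n ?S_INR; ring.
Qed.
End Sums.

Lemma rsum_const (T : finType) (c : R) : rsum (fun _ : T => c) = INR #|T| * c.
Proof. by rewrite /rsum bsum_const cardE /enum_mem count_predT size_filter. Qed.

Lemma rsum_pos (T : finType) (f : T -> R) (x0 : T) :
  (forall x, 0 <= f x) -> 0 < f x0 -> 0 < rsum f.
Proof.
move=> H H0; rewrite /rsum (bigD1 x0) //=.
have := @bsum_ge0 _ (index_enum T) (fun i => i != x0) f (fun i _ => H i); lra.
Qed.

Lemma rsum_add (T : finType) (f g : T -> R) : rsum (fun x => f x + g x) = rsum f + rsum g.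
Proof. exact: bsum_add. Qed.
Lemma rsum_scal (T : finType) c (f : T -> R) : rsum (fun x => c * f x) = c * rsum f.
Proof. exact: bsum_scal. Qed.
Lemma rsum_le (T : finType) (f g : T -> R) : (forall x, f x <= g x) -> rsum f <= rsum g.
Proof. by move=> H; apply: bsum_le => i _; apply: H. Qed.
Lemma rsum_ext (T : finType) (f g : T -> R) : (forall x, f x = g x) -> rsum f = rsum g.
Proof. by move=> H; apply: eq_bigr => i _; apply: H. Qed.

Lemma ln_le' x y : 0 < x -> x <= y -> ln x <= ln y.
Proof.
move=> Hx [Hxy|->]; last by lra.
by apply: Rlt_le; apply: ln_increasing.
Qed.

Lemma exp_conv t u v : 0 <= t <= 1 ->
  exp (t * u + (1 - t) * v) <= t * exp u + (1 - t) * exp v.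
Proof.
move=> Ht; set m := t * u + (1 - t) * v.
have Hu : exp u = exp m * exp (u - m) by rewrite -exp_plus; f_equal; ring.
have Hv : exp v = exp m * exp (v - m) by rewrite -exp_plus; f_equal; ring.
have H1 := exp_ineq1_le (u - m); have H2 := exp_ineq1_le (v - m).
have Hm := exp_pos m.
rewrite Hu Hv.
have E1 : exp m * (1 + (u - m)) <= exp m * exp (u - m) by apply: Rmult_le_compat_l; lra.
have E2 : exp m * (1 + (v - m)) <= exp m * exp (v - m) by apply: Rmult_le_compat_l; lra.
have F1 : t * (exp m * (1 + (u - m))) <= t * (exp m * exp (u - m)) by apply: Rmult_le_compat_l; lra.
have F2 : (1 - t) * (exp m * (1 + (v - m))) <= (1 - t) * (exp m * exp (v - m)) by apply: Rmult_le_compat_l; lra.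
have : t * (exp m * (1 + (u - m))) + (1 - t) * (exp m * (1 + (v - m))) = exp m.
  rewrite /m; ring.
lra.
Qed.

Section LSE.
Variable U : finType.
Variable x0 : U.

Definition lse (a : U -> R) := ln (rsum (fun s => exp (a s))).

Lemma sexp_pos (a : U -> R) : 0 < rsum (fun s => exp (a s)).
Proof. apply: (rsum_pos (x0 := x0)) => [x|]; apply: Rlt_le || idtac; apply: exp_pos. Qed.

Lemma lse_shift (a : U -> R) c : lse (fun s => a s + c) = lse a + c.
Proof.
rewrite /lse (rsum_ext (g := fun s => exp c * exp (a s))); last first.
  by move=> x; rewrite exp_plus Rmult_comm.
rewrite rsum_scal ln_mult ?ln_exp; [ring|apply: exp_pos|apply: sexp_pos].
Qed.

Lemma lse_mono (a b : U -> R) : (forall s, a s <= b s) -> lse a <= lse b.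
Proof.
move=> H; apply: ln_le'; first exact: sexp_pos.
apply: rsum_le => x; case: (H x) => [Hl|->]; last by lra.
by apply: Rlt_le; apply: exp_increasing.
Qed.

Lemma lse_convex (a b : U -> R) t : 0 <= t <= 1 ->
  lse (fun s => t * a s + (1 - t) * b s) <= t * lse a + (1 - t) * lse b.
Proof.
move=> Ht; rewrite /lse.
set A := rsum (fun s => exp (a s)); set B := rsum (fun s => exp (b s)).
have HA : 0 < A := sexp_pos a. have HB : 0 < B := sexp_pos b.
set w := t * ln A + (1 - t) * ln B.
rewrite -[X in _ <= X](ln_exp w).
apply: ln_le'; first exact: sexp_pos.
apply: Rle_trans (_ : rsum (fun s => exp w * (t * (/ A * exp (a s)) + (1 - t) * (/ B * exp (b s)))) <= _).
  apply: rsum_le => s.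
  have -> : t * a s + (1 - t) * b s = w + (t * (a s - ln A) + (1 - t) * (b s - ln B)) by rewrite /w; ring.
  rewrite exp_plus; apply: Rmult_le_compat_l; first by apply: Rlt_le; apply: exp_pos.
  have Ea : / A * exp (a s) = exp (a s - ln A).
    by rewrite /Rminus exp_plus exp_Ropp exp_ln // Rmult_comm.
  have Eb : / B * exp (b s) = exp (b s - ln B).
    by rewrite /Rminus exp_plus exp_Ropp exp_ln // Rmult_comm.
  rewrite Ea Eb; exact: exp_conv.
rewrite rsum_scal rsum_add !rsum_scal -/A -/B Rinv_l ?Rinv_l; try lra.
Qed.

End LSE.
Lemma limsup_le (u : nat -> R) L K : is_limsup u L ->
  (forall eps, 0 < eps -> exists N0, forall N, (N0 <= N)%coq_nat -> u N <= K + eps) ->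
  L <= K.
Proof.
move=> [_ H2] H.
apply: Rnot_lt_le => HK.
have He : 0 < (L - K) / 3 by lra.
have [N0 HN0] := H _ He.
have [N [HN Hu]] := H2 _ He N0.
have := HN0 N HN. lra.
Qed.

Lemma limsup_uniq u L1 L2 : is_limsup u L1 -> is_limsup u L2 -> L1 = L2.
Proof.
move=> H1 H2; apply: Rle_antisym.
  exact (limsup_le H1 (proj1 H2)).
exact: (limsup_le H2 (proj1 H1)).
Qed.

Lemma Rlimsup_eq u L : is_limsup u L -> Rlimsup u = L.
Proof.
move=> H; rewrite /Rlimsup.
have := epsilon_spec (inhabits 0) (is_limsup u) (ex_intro _ L H).
by move/limsup_uniq; apply.
Qed.

Lemma limsup_exists (u : nat -> R) B : (forall N, - B <= u N <= B) ->
  exists L, is_limsup u L.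
Proof.
move=> Hb.
pose E N0 := fun x => exists k, (N0 <= k)%coq_nat /\ x = u k.
have HU : forall N0, {x | is_lub (E N0) x}.
  move=> N0; apply: completeness.
    by exists B => x [k [_ ->]]; case: (Hb k).
  by exists (u N0); exists N0; split; [lia|done].
pose U N0 := proj1_sig (HU N0).
have HUs : forall N0, is_lub (E N0) (U N0) := fun N0 => proj2_sig (HU N0).
have HUu : forall N0 k, (N0 <= k)%coq_nat -> u k <= U N0.
  by move=> N0 k Hk; case: (HUs N0) => H _; apply: H; exists k.
have HUl : forall N0, - B <= U N0.
  by move=> N0; have := HUu N0 N0 (le_n _); case: (Hb N0); lra.
pose F := fun y => exists N0, y = - U N0.
have [L' HL'] : {m | is_lub F m}.
  apply: completeness.
    by exists B => y [N0 ->]; have := HUl N0; lra.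
  by exists (- U 0%nat); exists 0%nat.
exists (- L'); split.
  move=> eps He.
  have [N0 HN0] : exists N0, U N0 <= - L' + eps.
    apply: NNPP => Hn.
    have Hub : is_upper_bound F (L' - eps).
      move=> y [N0 ->].
      have : ~ U N0 <= - L' + eps by move=> H; apply: Hn; exists N0.
      lra.
    case: HL' => _ H; have := H _ Hub; lra.
  exists N0 => N HN; have := HUu N0 N HN; lra.
move=> eps He N0.
have HUL : - L' <= U N0.
  case: HL' => H _; have := H (- U N0) (ex_intro _ N0 erefl); lra.
apply: NNPP => Hn.
have Hub : is_upper_bound (E N0) (- L' - eps).
  move=> x [k [Hk ->]].
  have : ~ (- L' - eps <= u k) by move=> H; apply: Hn; exists k.
  lra.
case: (HUs N0) => _ H; have := H _ Hub; lra.
Qed.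

Lemma sum_ord_const N c : \big[Rplus/0]_(j < N) c = INR N * c.
Proof.
rewrite big_const_ord; elim: N => [|N IH]; first by rewrite /=; ring.
by rewrite S_INR iterS IH; ring.
Qed.

Lemma sum_ind_card (T : finType) (P : pred T) :
  \big[Rplus/0]_(j : T) (if P j then 1 else 0) = INR #|P|.
Proof.
rewrite -big_mkcond bsum_const cardE /enum_mem size_filter Rmult_1_r.
by rewrite /index_enum; case: index_enum_key.
Qed.

Lemma INR_expn a b : INR (expn a b) = INR a ^ b.
Proof.
elim: b => [|b IH]; first by rewrite expn0 /=.
by rewrite expnS -multE mult_INR IH /=.
Qed.

Lemma supdist_ge (T : finType) (h h' : T -> R) x :
  Rabs (h x - h' x) <= \big[Rmax/0]_(y : T) Rabs (h y - h' y).
Proof.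
have : x \in index_enum T by exact: mem_index_enum.
elim: (index_enum T) => [|y s IH] //.
rewrite in_cons big_cons => /orP [/eqP ->|Hx]; first by apply: Rmax_l.
apply: Rle_trans (IH Hx) _; exact: Rmax_r.
Qed.

Section Press.
Variables (d n : nat) (Xi : forall N : nat, 'I_n -> 'I_N -> 'I_d).
Notation V := {ffun 'I_n -> 'I_d}.

Definition S N (s : {ffun 'I_n -> {perm 'I_N}}) (h : V -> R) :=
  \big[Rplus/0]_(j < N) h [ffun i => perm_act (s i) (@Xi N i) j].

Definition FN N (h : V -> R) :=
  / INR N * ln (/ pow (INR (factorial N)) n * partfun (@Xi N) h).

Lemma cN_pos (N : nat) : 0 < pow (INR (factorial N)) n.
Proof. apply: pow_lt; apply: lt_0_INR; apply/ltP; exact: fact_gt0. Qed.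

Definition s0 N : {ffun 'I_n -> {perm 'I_N}} := [ffun => 1%g].

Lemma FN_eq (N : nat) h : (0 < N)%nat ->
  FN N h = / INR N * (lse (fun s => @S N s h) - ln (pow (INR (factorial N)) n)).
Proof.
move=> HN; have HN' : INR N <> 0 by apply: not_0_INR => E; rewrite E in HN.
rewrite /FN /partfun (rsum_ext (g := fun s => exp (@S N s h))); last first.
  by move=> s; rewrite /S; f_equal; field.
rewrite ln_mult ?ln_Rinv /lse; first (f_equal; ring).
- exact: cN_pos.
- by apply: Rinv_0_lt_compat; apply: cN_pos.
- exact: (sexp_pos (@s0 N)).
Qed.

Lemma S_le (N : nat) s h h' D : (forall x, h x <= h' x + D) -> @S N s h <= @S N s h' + INR N * D.
Proof.
move=> H; rewrite /S -sum_ord_const -bsum_add; apply: bsum_le => j _; exact: H.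
Qed.

Lemma FN_lip (N : nat) h h' D : (0 < N)%nat -> (forall x, h x <= h' x + D) -> FN N h <= FN N h' + D.
Proof.
move=> HN H; rewrite !FN_eq //.
have HN' : 0 < INR N by apply: lt_0_INR; apply/ltP.
have := lse_mono (@s0 N) (a := fun s => @S N s h) (b := fun s => @S N s h' + INR N * D)
  (fun s => S_le s H).
rewrite (lse_shift (@s0 N)) => Hl.
have Hi : 0 < / INR N by apply: Rinv_0_lt_compat.
set L := lse _ in Hl *; set L' := lse _ in Hl *.
set c := ln _.
have -> : / INR N * (L' - c) + D = / INR N * (L' + INR N * D - c) by field; lra.
apply: Rmult_le_compat_l; lra.
Qed.

Lemma FN_convex (N : nat) h h' t : (0 < N)%nat -> 0 <= t <= 1 ->
  FN N (fun x => t * h x + (1 - t) * h' x) <= t * FN N h + (1 - t) * FN N h'.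
Proof.
move=> HN Ht; rewrite !FN_eq //.
have HN' : 0 < INR N by apply: lt_0_INR; apply/ltP.
have Hi : 0 < / INR N by apply: Rinv_0_lt_compat.
have E : forall s, @S N s (fun x => t * h x + (1 - t) * h' x) = t * @S N s h + (1 - t) * @S N s h'.
  by move=> s; rewrite /S bsum_add !bsum_scal.
rewrite (_ : lse _ = lse (fun s => t * @S N s h + (1 - t) * @S N s h')); last first.
  by rewrite /lse; f_equal; apply: rsum_ext => s; rewrite E.
have := lse_convex (@s0 N) (fun s => @S N s h) (fun s => @S N s h') Ht.
set A := lse _; set B := lse _; set C := lse _; set c := ln _ => Hc.
have -> : t * (/ INR N * (B - c)) + (1 - t) * (/ INR N * (C - c)) =
          / INR N * (t * B + (1 - t) * C - c) by ring.
apply: Rmult_le_compat_l; lra.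
Qed.

Lemma FN_zero (N : nat) : (0 < N)%nat -> FN N (fun _ => 0) = 0.
Proof.
move=> HN; rewrite FN_eq // /lse /S.
rewrite (rsum_ext (g := fun _ => 1)); last first.
  by move=> s; rewrite sum_ord_const Rmult_0_r exp_0.
rewrite rsum_const card_ffun card_Sn card_ord INR_expn Rmult_1_r; ring.
Qed.

Lemma FN_marg (N : nat) h i t0 k : (0 < N)%nat ->
  FN N (fun x => h x + k * (if x i == t0 then 1 else 0)) = FN N h + k * typ (@Xi N i) t0.
Proof.
move=> HN; have HN' : INR N <> 0 by apply: not_0_INR => E; rewrite E in HN.
rewrite !FN_eq //.
rewrite (_ : lse _ = lse (fun s => @S N s h + k * INR #|[pred j : 'I_N | @Xi N i j == t0]|)).
  rewrite (lse_shift (@s0 N)) /typ; field; done.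
rewrite /lse; f_equal; apply: rsum_ext => s; f_equal.
rewrite /S bsum_add bsum_scal; f_equal; f_equal.
rewrite -sum_ind_card.
rewrite (reindex_inj (h := s i) (@perm_inj _ (s i))) /=.
apply: eq_bigr => j _; rewrite ffunE /perm_act permK //.
Qed.

End Press.

Lemma Un_cv_const c : Un_cv (fun _ => c) c.
Proof. move=> eps He; exists 0%nat => N _; rewrite /R_dist Rminus_diag Rabs_R0; lra. Qed.

Lemma limsup_lip u v c Lu Lv cl : is_limsup u Lu -> is_limsup v Lv ->
  (exists N1, forall N, (N1 <= N)%coq_nat -> u N <= v N + c N) -> Un_cv c cl ->
  Lu <= Lv + cl.
Proof.
move=> Hu [Hv _] [N1 H1] Hc.
apply: (limsup_le Hu) => eps He.
have He2 : 0 < eps / 2 by lra.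
have [N2 H2] := Hv _ He2.
have [N3 H3] := Hc _ He2.
exists (Nat.add (Nat.add N1 N2) N3) => N HN.
have := H1 N ltac:(lia); have := H2 N ltac:(lia); have := H3 N ltac:(lia).
rewrite /R_dist => Ha.
have := Rle_abs (c N - cl); lra.
Qed.

Lemma limsup_conv w u v Lw Lu Lv t : is_limsup w Lw -> is_limsup u Lu -> is_limsup v Lv ->
  0 <= t <= 1 ->
  (exists N1, forall N, (N1 <= N)%coq_nat -> w N <= t * u N + (1 - t) * v N) ->
  Lw <= t * Lu + (1 - t) * Lv.
Proof.
move=> Hw [Hu _] [Hv _] Ht [N1 H1].
apply: (limsup_le Hw) => eps He.
have [N2 H2] := Hu _ He.
have [N3 H3] := Hv _ He.
exists (Nat.add (Nat.add N1 N2) N3) => N HN.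
have := H1 N ltac:(lia); have := H2 N ltac:(lia); have := H3 N ltac:(lia).
move=> A B C.
have : t * u N <= t * (Lu + eps) by apply: Rmult_le_compat_l; lra.
have : (1 - t) * v N <= (1 - t) * (Lv + eps) by apply: Rmult_le_compat_l; lra.
nra.
Qed.

Section Psym.
Variables (d n : nat) (Xi : forall N : nat, 'I_n -> 'I_N -> 'I_d).
Notation V := {ffun 'I_n -> 'I_d}.

Lemma PsymE h : Psym Xi h = Rlimsup (fun N => FN Xi N h).
Proof. by []. Qed.

Lemma FN_bound h : exists B, forall N, - B <= FN Xi N h <= B.
Proof.
set D := supdist h (fun _ => 0).
have HD : forall x, Rabs (h x - 0) <= D by move=> x; exact: (supdist_ge h (fun _ => 0) x).
exists (Rmax D (Rabs (FN Xi 0 h))) => N.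
case: N => [|N].
  have := Rle_abs (FN Xi 0 h); have := Rle_abs (- FN Xi 0 h); rewrite Rabs_Ropp.
  have := Rmax_r D (Rabs (FN Xi 0 h)); lra.
have HN : (0 < N.+1)%nat by [].
have Z := FN_zero Xi HN.
have H1 : FN Xi N.+1 h <= FN Xi N.+1 (fun _ => 0) + D.
  apply: FN_lip => // x; have := HD x; have := Rle_abs (h x - 0); lra.
have H2 : FN Xi N.+1 (fun _ => 0) <= FN Xi N.+1 h + D.
  apply: FN_lip => // x; have := HD x; have := Rle_abs (- (h x - 0)); rewrite Rabs_Ropp; lra.
have := Rmax_l D (Rabs (FN Xi 0 h)); lra.
Qed.

Lemma Psym_spec h : is_limsup (fun N => FN Xi N h) (Psym Xi h).
Proof.
have [B HB] := FN_bound h.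
have [L HL] := limsup_exists HB.
by rewrite PsymE (Rlimsup_eq HL).
Qed.

Lemma Psym_lip h h' D : (forall x, h x <= h' x + D) -> Psym Xi h <= Psym Xi h' + D.
Proof.
move=> H; apply: (limsup_lip (Psym_spec h) (Psym_spec h') (c := fun _ => D)); last exact: Un_cv_const.
exists 1%nat => N HN; apply: FN_lip => //; apply/ltP; lia.
Qed.

Lemma Psym_convex h h' t : 0 <= t <= 1 ->
  Psym Xi (fun x => t * h x + (1 - t) * h' x) <= t * Psym Xi h + (1 - t) * Psym Xi h'.
Proof.
move=> Ht; apply: (limsup_conv (Psym_spec _) (Psym_spec h) (Psym_spec h') Ht).
exists 1%nat => N HN; apply: FN_convex => //; apply/ltP; lia.
Qed.

Lemma Psym_marg (mus : 'I_n -> 'I_d -> R) h i t0 k :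
  (forall i t, Un_cv (fun N => typ (@Xi N i) t) (mus i t)) ->
  Psym Xi (fun x => h x + k * (if x i == t0 then 1 else 0)) = Psym Xi h + k * mus i t0.
Proof.
move=> Hcv.
have C1 : Un_cv (fun N => k * typ (@Xi N i) t0) (k * mus i t0).
  exact: CV_mult (Un_cv_const k) (Hcv i t0).
have C2 : Un_cv (fun N => - k * typ (@Xi N i) t0) (- k * mus i t0).
  exact: CV_mult (Un_cv_const (- k)) (Hcv i t0).
apply: Rle_antisym.
  apply: (limsup_lip (Psym_spec _) (Psym_spec h) _ C1).
  exists 1%nat => N HN; rewrite FN_marg; first lra; apply/ltP; lia.
have := limsup_lip (Psym_spec h) (Psym_spec (fun x => h x + k * (if x i == t0 then 1 else 0))) _ C2.
have : exists N1, forall N, (N1 <= N)%coq_nat ->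
   FN Xi N h <= FN Xi N (fun x => h x + k * (if x i == t0 then 1 else 0)) + - k * typ (@Xi N i) t0.
  exists 1%nat => N HN; rewrite FN_marg; first lra; apply/ltP; lia.
move=> H /(_ H); lra.
Qed.

End Psym.

Section HBan.
Variable T : finType.
Variable P : (T -> R) -> R.
Hypothesis Hconv : forall p q t, 0 <= t <= 1 ->
  P (fun x => t * p x + (1 - t) * q x) <= t * P p + (1 - t) * P q.
Variable h : T -> R.

Definition supp (s : seq T) (w : T -> R) := forall x, x \notin s -> w x = 0.
Definition Lf (m w : T -> R) := rsum (fun x => w x * m x).
Definition good s m := forall w, supp s w -> P h + Lf m w <= P (fun x => h x + w x).

Lemma Lf_lin m w w' a b : Lf m (fun x => a * w x + b * w' x) = a * Lf m w + b * Lf m w'.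
Proof.
rewrite /Lf -!rsum_scal -rsum_add; apply: rsum_ext => x; ring.
Qed.

Lemma key s m (dl : T -> R) r t w w' : good s m -> 0 < r -> 0 < t -> supp s w -> supp s w' ->
  t * (P h + Lf m w' - P (fun x => h x + w' x - r * dl x)) <=
  r * (P (fun x => h x + w x + t * dl x) - P h - Lf m w).
Proof.
move=> Hm Hr Ht Hw Hw'.
set z := fun x => (r / (r + t)) * w x + (t / (r + t)) * w' x.
have Hz : supp s z by move=> x Hx; rewrite /z Hw // Hw' //; ring.
have H1 := Hm z Hz.
have Hl : 0 <= r / (r + t) <= 1.
  split; first by apply: Rlt_le; apply: Rdiv_lt_0_compat; lra.
  apply: (Rmult_le_reg_r (r + t)); first lra.
  rewrite /Rdiv Rmult_assoc Rinv_l; lra.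
have H2 := Hconv (fun x => h x + w x + t * dl x) (fun x => h x + w' x - r * dl x) Hl.
have E : (fun x => r / (r + t) * (h x + w x + t * dl x) + (1 - r / (r + t)) * (h x + w' x - r * dl x))
   = (fun x => h x + z x).
  apply: functional_extensionality => x; rewrite /z; field; lra.
rewrite E in H2.
have E2 : Lf m z = r / (r + t) * Lf m w + t / (r + t) * Lf m w' by apply: Lf_lin.
have E3 : 1 - r / (r + t) = t / (r + t) by field; lra.
rewrite E3 E2 in H2 H1.
set A := P (fun x => h x + w x + t * dl x) in H2 *.
set B := P (fun x => h x + w' x - r * dl x) in H2 *.
set C := P (fun x => h x + z x) in H1 H2.
have H3 : P h + (r / (r + t) * Lf m w + t / (r + t) * Lf m w') <= r / (r + t) * A + t / (r + t) * B by lra.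
have H4 : (r + t) * (P h + (r / (r + t) * Lf m w + t / (r + t) * Lf m w')) <=
          (r + t) * (r / (r + t) * A + t / (r + t) * B).
  by apply: Rmult_le_compat_l; lra.
have E5 : (r + t) * (P h + (r / (r + t) * Lf m w + t / (r + t) * Lf m w')) =
   (r + t) * P h + r * Lf m w + t * Lf m w' by field; lra.
have E6 : (r + t) * (r / (r + t) * A + t / (r + t) * B) = r * A + t * B by field; lra.
lra.
Qed.

Lemma good_nil : good [::] (fun _ => 0).
Proof.
move=> w Hw.
have -> : (fun x => h x + w x) = h.
  by apply: functional_extensionality => x; rewrite Hw ?Rplus_0_r.
have -> : Lf (fun _ => 0) w = 0.
  rewrite /Lf (@rsum_ext _ _ (fun _ => 0)); first by rewrite rsum_const; ring.
  by move=> x /=; ring.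
lra.
Qed.

Lemma good_cons s m x0 : good s m -> exists m', good (x0 :: s) m'.
Proof.
move=> Hm.
pose dl := fun x : T => if x == x0 then 1 else 0.
pose A := fun y => exists r w, 0 < r /\ supp s w /\
   y = (P h + Lf m w - P (fun x => h x + w x - r * dl x)) / r.
pose b0 := P (fun x => h x + (fun _ => 0) x + 1 * dl x) - P h - Lf m (fun _ => 0).
have Hs0 : supp s (fun _ => 0) by [].
have Hub : forall t w, 0 < t -> supp s w -> is_upper_bound A ((P (fun x => h x + w x + t * dl x) - P h - Lf m w) / t).
  move=> t w Ht Hw y [r [w' [Hr [Hw' ->]]]].
  have K := key dl Hm Hr Ht Hw Hw'.
  set a := (P h + Lf m w' - _) in K *; set b := (P _ - P h - Lf m w) in K *.
  replace (a / r) with ((t * a) * / (r * t)) by (field; lra).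
  replace (b / t) with ((r * b) * / (r * t)) by (field; lra).
  apply: Rmult_le_compat_r; last lra.
  by left; apply: Rinv_0_lt_compat; nra.
have [a Ha] : {a | is_lub A a}.
  apply: completeness.
    exists (b0 / 1); apply: Hub => //; lra.
  exists ((P h + Lf m (fun _ => 0) - P (fun x => h x + (fun _ => 0) x - 1 * dl x)) / 1).
  by exists 1, (fun _ => 0); split; [lra|split].
exists (fun x => if x == x0 then a else m x).
move=> w Hw.
pose w' := fun x => if x == x0 then 0 else w x.
have Hw' : supp s w'.
  move=> x Hx; rewrite /w'; case: eqP => // Hne; apply: Hw.
  by rewrite in_cons negb_or Hx andbT; apply/eqP.
set t := w x0.
have EL : Lf (fun x => if x == x0 then a else m x) w = Lf m w' + t * a.
  rewrite /Lf /rsum (bigD1 x0) //= (bigD1 x0 (F := fun x => w' x * m x)) //= eqxx /w' eqxx.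
  rewrite Rmult_0_l Rplus_0_l Rplus_comm; f_equal.
  by apply: eq_bigr => x /negbTE ->.
have EW : forall c, c = t -> (fun x => h x + w x) = (fun x => h x + w' x + c * dl x).
  move=> c -> ; apply: functional_extensionality => x; rewrite /w' /dl /t.
  by case: eqP => [->|_]; ring.
rewrite EL.
case: (Rtotal_order t 0) => [Hneg|[Hz|Hpos]].
-
  have HA : A ((P h + Lf m w' - P (fun x => h x + w' x - (- t) * dl x)) / (- t)).
    by exists (- t), w'; split; [lra|split].
  have Hle := proj1 Ha _ HA.
  have Ef : (fun x => h x + w' x - (- t) * dl x) = (fun x => h x + w x).
    rewrite (EW t erefl); apply: functional_extensionality => x; ring.
  rewrite Ef in Hle.
  set Q := P (fun x => h x + w x) in Hle *.
  have : (P h + Lf m w' - Q) <= a * (- t).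
    have E1 : P h + Lf m w' - Q = ((P h + Lf m w' - Q) / (- t)) * (- t) by field; lra.
    rewrite E1; apply: Rmult_le_compat_r; lra.
  lra.
- have := Hm w' Hw'.
  have -> : (fun x => h x + w' x) = (fun x => h x + w x).
    rewrite (EW t erefl); apply: functional_extensionality => x; rewrite Hz; ring.
  rewrite Hz; lra.
- have Hle := proj2 Ha _ (Hub t w' Hpos Hw').
  rewrite -(EW t erefl) in Hle.
  set Q := P (fun x => h x + w x) in Hle *.
  have : a * t <= (Q - P h - Lf m w').
    have E1 : Q - P h - Lf m w' = ((Q - P h - Lf m w') / t) * t by field; lra.
    rewrite E1; apply: Rmult_le_compat_r; lra.
  lra.
Qed.

Lemma subgrad : exists m : T -> R, forall w, P h + rsum (fun x => w x * m x) <= P (fun x => h x + w x).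
Proof.
have : exists m, good (index_enum T) m.
  elim: (index_enum T) => [|x0 s [m Hm]]; first by exists (fun _ => 0); exact: good_nil.
  exact: good_cons Hm.
move=> [m Hm]; exists m => w; apply: Hm => x.
by rewrite mem_index_enum.
Qed.

End HBan.

Lemma rsum_delta (T : finType) (x0 : T) (f : T -> R) :
  rsum (fun y => (if y == x0 then 1 else 0) * f y) = f x0.
Proof.
rewrite /rsum (bigD1 x0) //= eqxx big1 ?Rmult_1_l ?Rplus_0_r //.
by move=> y /negbTE ->; ring.
Qed.

Theorem mainTheorem15 (d n : nat) (mus : 'I_n -> 'I_d -> R)
  (Hmus : forall i, isProb (mus i))
  (Xi : forall N : nat, 'I_n -> 'I_N -> 'I_d) (HXi : approx_seq mus Xi)
  (h : {ffun 'I_n -> 'I_d} -> R) :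
  (exists m, coupling mus m /\
     exists I, is_Isym Xi m I /\ Psym Xi h = (expect m h - I)%R) /\
  (forall m, coupling mus m ->
     forall I, is_Isym Xi m I -> (expect m h - I <= Psym Xi h)%R) /\
  (forall h' : {ffun 'I_n -> 'I_d} -> R,
     (Rabs (Psym Xi h - Psym Xi h') <= supdist h h')%R).
Proof.
have Hcv := proj2 HXi.
split; [|split].
- have [m Hm] : exists m, forall w, Psym Xi h + rsum (fun x => w x * m x) <=
                     Psym Xi (fun x => h x + w x).
    by apply: subgrad => p q t Ht; apply: Psym_convex.
  exists m; split.
    split; first split.
    + move=> x.
      have /= := Hm (fun y => -1 * (if y == x then 1 else 0)).
      rewrite (@rsum_ext _ _ (fun y => -1 * ((if y == x then 1 else 0) * m y))); last by move=> y; ring.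
      rewrite rsum_scal rsum_delta.
      have : Psym Xi (fun y => h y + -1 * (if y == x then 1 else 0)) <= Psym Xi h + 0.
        apply: Psym_lip => y; case: (y == x); lra.
      move=> A B; have := Rle_trans _ _ _ B A; lra.
    + have /= H1 := Hm (fun _ => 1).
      have /= H2 := Hm (fun _ => -1).
      rewrite (@rsum_ext _ _ m) in H1; last by move=> y; ring.
      rewrite (@rsum_ext _ _ (fun y => -1 * m y)) in H2; last by move=> y; ring.
      rewrite rsum_scal in H2.
      have A1 : Psym Xi (fun y => h y + 1) <= Psym Xi h + 1 by apply: Psym_lip => y; lra.
      have A2 : Psym Xi (fun y => h y + -1) <= Psym Xi h + -1 by apply: Psym_lip => y; lra.
      have := Rle_trans _ _ _ H1 A1; have := Rle_trans _ _ _ H2 A2; lra.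
    + move=> i t.
      have EM : marginal m i t = rsum (fun x : {ffun 'I_n -> 'I_d} => (if x i == t then 1 else 0) * m x).
        rewrite /marginal /rsum big_mkcond; apply: eq_bigr => x _.
        by case: (x i == t); ring.
      have /= H1 := Hm (fun x : {ffun 'I_n -> 'I_d} => 1 * (if x i == t then 1 else 0)).
      have /= H2 := Hm (fun x : {ffun 'I_n -> 'I_d} => -1 * (if x i == t then 1 else 0)).
      rewrite (Psym_marg _ _ _ _ Hcv) in H1.
      rewrite (Psym_marg _ _ _ _ Hcv) in H2.
      rewrite (@rsum_ext _ _ (fun x : {ffun 'I_n -> 'I_d} => 1 * ((if x i == t then 1 else 0) * m x))) in H1; last by move=> y; ring.
      rewrite (@rsum_ext _ _ (fun x : {ffun 'I_n -> 'I_d} => -1 * ((if x i == t then 1 else 0) * m x))) in H2; last by move=> y; ring.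
      rewrite !rsum_scal -EM in H1 H2.
      lra.
  exists (expect m h - Psym Xi h); split; last by ring.
  split.
    move=> r [h' ->].
    have /= := Hm (fun x => h' x - h x).
    have -> : (fun x => h x + (h' x - h x)) = h'.
      by apply: functional_extensionality => x; ring.
    rewrite (@rsum_ext _ _ (fun x => h' x * m x + -1 * (h x * m x))); last by move=> y; ring.
    rewrite rsum_add rsum_scal /expect; lra.
  move=> b Hb; apply: Hb; exists h; done.
- move=> m Hm I [HI _].
  have := HI (expect m h - Psym Xi h) (ex_intro _ h erefl); lra.
- move=> h'.
  set D := supdist h h'.
  have HD : forall x, Rabs (h x - h' x) <= D by move=> x; exact: supdist_ge.
  have H1 : Psym Xi h <= Psym Xi h' + D.
    by apply: Psym_lip => x; have := HD x; have := Rle_abs (h x - h' x); lra.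
  have H2 : Psym Xi h' <= Psym Xi h + D.
    apply: Psym_lip => x; have := HD x; have := Rle_abs (- (h x - h' x)).
    rewrite Rabs_Ropp; lra.
  apply: Rabs_le; lra.
Qed.
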